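(* For every integers $d \geq 2$ and $s,t \geq 1$, $$\tfrac{s}{s+t}\mathsf {Brac}_{d,s}+\tfrac{t}{s+t}\mathsf {Brac}_{d,t}\subseteq \mathsf {Brac}_{d,s+t},$$ i.e. if $(\alpha,\beta)\in\mathsf{Brac}_{d,s}$ and $(\mu,\nu)\in\mathsf{Brac}_{d,t}$ then $\big(\tfrac{s\alpha+t\mu}{s+t},\tfrac{s\beta+t\nu}{s+t}\big)\in\mathsf{Brac}_{d,s+t}$.
   Context: $\Delta_d=\{\alpha\in\mathbb R^d:\alpha_i\ge0,\ \sum_i\alpha_i=1\}$. For $s\ge1$, $\mathsf{Brac}_{d,s}$ is the set of $(\alpha,\beta)\in\Delta_d^2$ for which there exist $A_1,\dots,A_d,B_1,\dots,B_d\in M_s(\mathbb C)$ with $\sum_i A_iA_i^*=\sum_iB_iB_i^*=I_s$, $\sum_iA_iB_i^*=0$, and $\tfrac1s\|A_i\|_F^2=\alpha_i$, $\tfrac1s\|B_i\|_F^2=\beta_i$ for all $i\in[d]$, where $\|X\|_F=\operatorname{Tr}(XX^* )^{1/2}$. *)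

(* Defs.v *)
From HB Require Import structures.
From mathcomp Require Import all_boot all_order all_algebra.
From mathcomp Require Import complex.
From mathcomp Require Import reals.
Set Implicit Arguments. Unset Strict Implicit. Unset Printing Implicit Defensive.
Import Order.TTheory GRing.Theory Num.Theory ComplexField.
Local Open Scope ring_scope.
Local Open Scope complex_scope.

Definition adjmx (R : rcfType) m n (A : 'M[R[i]]_(m, n)) : 'M[R[i]]_(n, m) :=
  map_mx conjc (A^T).

Definition simplex (R : realType) (d : nat) (a : 'I_d -> R) : Prop :=
  (forall i, 0 <= a i) /\ \sum_(i < d) a i = 1.

(* Brac_{d,s}: the set of (alpha, beta) in Delta_d^2 realized by
   s x s complex matrices A_1..A_d, B_1..B_d with
   sum A_i A_i^* = sum B_i B_i^* = I, sum A_i B_i^* = 0,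
   and (1/s)||A_i||_F^2 = alpha_i, (1/s)||B_i||_F^2 = beta_i. *)
Definition Brac (R : realType) (d s : nat) (a b : 'I_d -> R) : Prop :=
  simplex a /\ simplex b /\
  exists (A B : 'I_d -> 'M[R[i]]_s),
    \sum_(i < d) A i *m adjmx (A i) = 1%:M /\
    \sum_(i < d) B i *m adjmx (B i) = 1%:M /\
    \sum_(i < d) A i *m adjmx (B i) = 0 /\
    (forall i, \tr (A i *m adjmx (A i)) = ((s%:R * a i)%R)%:C) /\
    (forall i, \tr (B i *m adjmx (B i)) = ((s%:R * b i)%R)%:C).
Arguments Brac {R} d s a b.

(* Main.v *)
Require Import Defs.
From HB Require Import structures.
From mathcomp Require Import all_boot all_order all_algebra.
From mathcomp Require Import complex.
From mathcomp Require Import reals.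
Import Order.TTheory GRing.Theory Num.Theory.
Local Open Scope ring_scope.
Local Open Scope complex_scope.

Set Implicit Arguments.
Section Aux.
Variable R : realType.
Variables s t : nat.
Local Notation C := (R[i]).

Definition Dg (X : 'M[C]_s) (Y : 'M[C]_t) : 'M[C]_(s + t) := block_mx X 0 0 Y.

Lemma adj_Dg X Y : adjmx (Dg X Y) = Dg (adjmx X) (adjmx Y).
Proof.
rewrite /adjmx /Dg tr_block_mx map_block_mx !trmx0.
by congr block_mx; apply/matrixP => i j; rewrite !mxE /= raddf0.
Qed.

Lemma mul_Dg X Y X' Y' : Dg X Y *m Dg X' Y' = Dg (X *m X') (Y *m Y').
Proof. by rewrite /Dg mulmx_block !mulmx0 !mul0mx !addr0 !add0r. Qed.

Lemma sum_Dg d (X : 'I_d -> 'M[C]_s) Y :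
  \sum_(i < d) Dg (X i) (Y i) = Dg (\sum_(i < d) X i) (\sum_(i < d) Y i).
Proof.
elim/big_rec3: _ => [|i A' X' Y' _ ->]; first by rewrite /Dg block_mx0.
by rewrite /Dg add_block_mx !addr0.
Qed.

Lemma tr_Dg X Y : \tr (Dg X Y) = \tr X + \tr Y.
Proof. exact: mxtrace_block. Qed.
End Aux.
Arguments Dg {R s t}.
Arguments adj_Dg {R s t}.
Arguments mul_Dg {R s t}.
Arguments sum_Dg {R s t d}.
Arguments tr_Dg {R s t}.

Theorem proposition3p5 (R : realType) (d s t : nat)
  (a b m n : 'I_d -> R) :
  (2 <= d)%N -> (1 <= s)%N -> (1 <= t)%N ->
  Brac d s a b -> Brac d t m n ->
  Brac d (s + t)
    (fun i => (s%:R * a i + t%:R * m i) / (s + t)%:R)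
    (fun i => (s%:R * b i + t%:R * n i) / (s + t)%:R).
Proof.
move=> _ hs ht [[a0 a1] [[b0 b1] [A [B [AA [BB [AB [trA trB]]]]]]]]
  [[m0 m1] [[n0 n1] [M [N [MM [NN [MN [trM trN]]]]]]]].
have st0 : (s + t)%:R != 0 :> R by rewrite pnatr_eq0 -lt0n ltn_addr.
have simp (x y : 'I_d -> R) : (forall i, 0 <= x i) -> \sum_i x i = 1 ->
   (forall i, 0 <= y i) -> \sum_i y i = 1 ->
   simplex (fun i => (s%:R * x i + t%:R * y i) / (s + t)%:R).
  move=> x0 x1 y0 y1; split.
    by move=> i; rewrite divr_ge0 // addr_ge0 // mulr_ge0.
  rewrite -mulr_suml big_split /= -!mulr_sumr x1 y1 !mulr1 -natrD divff //.
split; first exact: simp.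
split; first exact: simp.
exists (fun i => Dg (A i) (M i)), (fun i => Dg (B i) (N i)).
have trC (x y : R) : (s%:R * x)%:C + (t%:R * y)%:C =
   ((s + t)%:R * ((s%:R * x + t%:R * y) / (s + t)%:R))%:C.
  by rewrite mulrCA mulfV // mulr1 rmorphD.
split; first by under eq_bigr do rewrite adj_Dg mul_Dg; rewrite sum_Dg AA MM /Dg [RHS](scalar_mx_block s t).
split; first by under eq_bigr do rewrite adj_Dg mul_Dg; rewrite sum_Dg BB NN /Dg [RHS](scalar_mx_block s t).
split; first by under eq_bigr do rewrite adj_Dg mul_Dg; rewrite sum_Dg AB MN /Dg block_mx0.
split=> i; by rewrite adj_Dg mul_Dg tr_Dg ?trA ?trM ?trB ?trN trC.
Qed.
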